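(* For any probability distribution $G$ with $\mathrm{supp}(G)\subseteq[0,K]$ for some $K\ge1$, there exists a universal constant $C>0$ such that $\sum_{y=0}^\infty\sqrt{f_G(y)}\le C\sqrt K$.
   Context: $f_G(y)=\int\frac{\theta^ye^{-\theta}}{y!}G(d\theta)$ for $y\in\{0,1,\dots\}$ (the Poisson mixture pmf). *)

(* Defs.v *)
From HB Require Import structures.
From mathcomp Require Import all_boot all_order all_algebra.
From mathcomp Require Import all_classical all_reals all_analysis.
Set Implicit Arguments. Unset Strict Implicit. Unset Printing Implicit Defensive.
Import Order.TTheory GRing.Theory Num.Theory.
Local Open Scope classical_set_scope.
Local Open Scope ring_scope.

Definition poisson_mix (R : realType) (G : probability (measurableTypeR R) R)
  (y : nat) : \bar R :=
  (\int[G]_(t in [set: R]) ((t ^+ y * expR (- t) / (y`!)%:R)%:E))%E.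

(* Main.v *)
From HB Require Import structures.
From mathcomp Require Import all_boot all_order all_algebra.
From mathcomp Require Import all_classical all_reals all_analysis.
Import Order.TTheory GRing.Theory Num.Theory.
Local Open Scope classical_set_scope.
Local Open Scope ring_scope.
Require Import Defs.
From mathcomp Require Import ring lra measurable_realfun.


Section S.
Variable R : realType.

Definition gg (y : nat) (t : R) : R := t ^+ y * expR (- t) / (y`!)%:R.

Lemma gg_meas y : measurable_fun setT (gg y).
Proof.
rewrite /gg; apply: measurable_funM; last exact: measurable_cst.
apply: measurable_funM; first exact: exprn_measurable.
apply: measurableT_comp; first exact: measurable_expR.
exact: measurable_funN.
Qed.

Lemma gg_ge0 y t : 0 <= t -> 0 <= gg y t.
Proof. by move=> t0; rewrite /gg mulr_ge0 ?mulr_ge0 ?exprn_ge0 ?expR_ge0. Qed.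

Lemma gg_sum n t : 0 <= t -> \sum_(y < n) gg y t <= 1.
Proof.
move=> t0.
have -> : \sum_(y < n) gg y t = expR (- t) * series (exp_coeff t) n.
  rewrite /series /= big_mkord big_distrr /=; apply: eq_bigr => i _.
  by rewrite /gg /exp_coeff /= mulrCA mulrA.
have H : series (exp_coeff t) n <= expR t.
  apply: nondecreasing_cvgn_le; last exact: is_cvg_series_exp_coeff.
  by apply: nondecreasing_series => k _ _; exact: exp_coeff_ge0.
rewrite -(expRxMexpNx_1 t) mulrC ler_wpM2r ?expR_ge0 //.
Qed.

Lemma gg_succ y t : gg y.+1 t = t / (y.+1)%:R * gg y t.
Proof.
rewrite /gg factS natrM exprS invfM; field.
rewrite pnatr_eq0 -lt0n fact_gt0 /= gt_eqF //; have := ler0n R y; lra.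
Qed.


Section I.
Variables (K : R) (G : probability (measurableTypeR R) R).
Hypothesis K1 : 1 <= K.
Hypothesis GK : G (~` `[0, K]%classic) = 0%E.

Definition cl (t : R) : R := Num.min (Num.max t 0) K.

Lemma cl_ge0 t : 0 <= cl t.
Proof. by rewrite /cl le_min le_max lexx orbT /= (le_trans _ K1). Qed.

Lemma cl_leK t : cl t <= K.
Proof. by rewrite /cl ge_min lexx orbT. Qed.

Lemma cl_id t : 0 <= t -> t <= K -> cl t = t.
Proof. by move=> t0 tK; rewrite /cl (max_idPl t0) (min_idPl tK). Qed.

Lemma cl_meas : measurable_fun setT cl.
Proof.
apply: measurable_minr; last exact: measurable_cst.
apply: measurable_maxr; [exact: measurable_id | exact: measurable_cst].
Qed.

Lemma hh_meas y : measurable_fun setT (fun t => (gg y (cl t))%:E).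
Proof.
apply/measurable_EFinP; apply: measurableT_comp; [exact: gg_meas|exact: cl_meas].
Qed.

Lemma Fe y : poisson_mix G y = (\int[G]_t (gg y (cl t))%:E)%E.
Proof.
rewrite /poisson_mix; apply: ae_eq_integral => //.
- apply/measurable_EFinP. exact: gg_meas.
- exact: hh_meas.
- exists (~` `[0, K]%classic); split => //.
    by apply: measurableC; exact: measurable_itv.
  apply: subsetC => t /=; rewrite in_itv /= => /andP[t0 tK] _.
  by rewrite cl_id.
Qed.

Lemma F_ge0 y : (0 <= poisson_mix G y)%E.
Proof.
by rewrite Fe; apply: integral_ge0 => t _; rewrite lee_fin gg_ge0 // cl_ge0.
Qed.

Lemma F_sum n : (\sum_(y < n) poisson_mix G y <= 1)%E.
Proof.
under eq_bigr do rewrite Fe.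
rewrite -ge0_integral_sum //; last first.
  by move=> k t _; rewrite lee_fin gg_ge0 // cl_ge0.
  by move=> k; exact: hh_meas.
apply: (@le_trans _ _ (\int[G]_t (cst 1%E) t)%E).
  apply: ge0_le_integral => //.
  - by move=> t _; apply: sume_ge0 => k _; rewrite lee_fin gg_ge0 // cl_ge0.
  - apply: emeasurable_sum => k; exact: hh_meas.
  - by move=> t _; rewrite sumEFin lee_fin gg_sum // cl_ge0.
by rewrite integral_cst // mul1e probability_le1.
Qed.

Lemma F_le1 y : (poisson_mix G y <= 1)%E.
Proof.
apply: le_trans (F_sum y.+1); rewrite big_ord_recr /= leeDr //.
by apply: sume_ge0 => k _; exact: F_ge0.
Qed.

Lemma F_succ y : (poisson_mix G y.+1 <= (K / y.+1%:R)%:E * poisson_mix G y)%E.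
Proof.
have k0 : 0 <= K / y.+1%:R by rewrite divr_ge0 // (le_trans _ K1).
rewrite !Fe -ge0_integralZl_EFin //; try exact: hh_meas;
  try (by move=> t _; rewrite lee_fin gg_ge0 // cl_ge0).
apply: ge0_le_integral => //.
- by move=> t _; rewrite lee_fin gg_ge0 // cl_ge0.
- exact: hh_meas.
- by apply: measurable_funeM; exact: hh_meas.
- move=> t _; rewrite gg_succ -EFinM lee_fin ler_wpM2r ?gg_ge0 ?cl_ge0 //.
  by rewrite ler_wpM2r ?invr_ge0 ?ler0n // cl_leK.
Qed.

End I.
End S.
Section T.
Variable R : realType.

Lemma series_bound (K : R) (f : nat -> R) : 1 <= K -> (forall y, 0 <= f y) ->
  (forall n, \sum_(y < n) f y <= 1) ->
  (forall y, f y.+1 <= K / y.+1%:R * f y) ->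
  forall n, \sum_(0 <= y < n) Num.sqrt (f y) <= 4 * Num.sqrt K.
Proof.
move=> K1 f0 fsum fsucc.
have K0 : 0 <= K by apply: le_trans K1.
pose N := Num.truncn (4 * K).
have /andP[hN1 hN2] : N%:R <= 4 * K < N.+1%:R.
  by apply: truncn_itv; rewrite mulr_ge0.
have ratio m : (N <= m)%N -> 4 * f m.+1 <= f m.
  move=> Nm.
  have hm : 4 * K <= m.+1%:R.
    by apply: (le_trans (ltW hN2)); rewrite ler_nat.
  have m0 : 0 < m.+1%:R :> R by rewrite ltr0n.
  set a := K / m.+1%:R.
  have ha : a * m.+1%:R = K by rewrite /a divfK // gt_eqF.
  have a0 : 0 <= a by rewrite /a divr_ge0 // ltW.
  have h4a : 4 * a <= 1 by nra.
  have := fsucc m; rewrite -/a => h.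
  have := f0 m; have := f0 m.+1; nra.
have sq m : (N <= m)%N -> 2 * Num.sqrt (f m.+1) <= Num.sqrt (f m).
  move=> Nm; have h := ratio m Nm.
  have e1 := sqr_sqrtr (f0 m); have e2 := sqr_sqrtr (f0 m.+1).
  have b0 := sqrtr_ge0 (f m); have a0 := sqrtr_ge0 (f m.+1).
  move: e1 e2 b0 a0 h.
  set a := Num.sqrt (f m.+1); set b := Num.sqrt (f m) => e1 e2 b0 a0.
  rewrite -e1 -e2 => h; nra.
pose S n := \sum_(0 <= y < n) Num.sqrt (f y).
pose s := Num.sqrt (N.+1%:R : R).
have s0 : 0 < s by rewrite /s sqrtr_gt0 ltr0n.
have s2 : s ^+ 2 = N.+1%:R by rewrite /s sqr_sqrtr // ler0n.
have hS1 : S N.+1 <= s.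
  have H : 2 * s * S N.+1 <= s ^+ 2 * \sum_(y < N.+1) f y + N.+1%:R.
    rewrite /S big_mkord mulr_sumr mulr_sumr.
    rewrite -[X in _ + X%:R](card_ord N.+1) -sumr_const -big_split /=.
    apply: ler_sum => i _.
    have := sqr_sqrtr (f0 i); have := sqrtr_ge0 (f i).
    set a := Num.sqrt (f i) => a0 ha.
    rewrite -ha; have := sqr_ge0 (a * s - 1).
nra.
  have := fsum N.+1; rewrite s2 in H; nra.
have step j : S (N + j)%N + 2 * Num.sqrt (f (N + j)%N) <= S N + 2 * Num.sqrt (f N).
  elim: j => [|j IH]; first by rewrite addn0.
  apply: le_trans IH.
  rewrite addnS /S big_nat_recr ?leq0n //= -/(S (N + j)%N) -addrA lerD2l.
  have := sq (N + j)%N (leq_addr _ _); lra.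
have fN1 : f N <= 1.
  apply: le_trans (fsum N.+1); rewrite big_ord_recr /= lerDr.
  by apply: sumr_ge0 => i _.
have sN1 : Num.sqrt (f N) <= 1.
  by rewrite -sqrtr1 ler_wsqrtr.
have sK : 1 <= Num.sqrt K by rewrite -sqrtr1 ler_wsqrtr.
have s3 : s <= 3 * Num.sqrt K.
  have := sqr_sqrtr K0; have := sqrtr_ge0 K.
  set b := Num.sqrt K => b0 hb.
  have : N.+1%:R <= 4 * K + 1 :> R by rewrite -natr1 lerD2r.
  rewrite -s2 -hb; nra.
move=> n.
have Sn : S n <= S (N + n)%N.
  by apply: nondecreasing_series => [k _ _|]; [exact: sqrtr_ge0|exact: leq_addl].
have := step n; have := sqrtr_ge0 (f (N + n)%N).
have : S N.+1 = S N + Num.sqrt (f N) by rewrite /S big_nat_recr.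
rewrite -/(S n); lra.
Qed.
End T.

Theorem lemma7 (R : realType) :
  exists C : R, 0 < C /\
    forall (K : R) (G : probability (measurableTypeR R) R),
      1 <= K ->
      G (~` `[0, K]%classic) = 0%E ->
      (\sum_(0 <= y <oo) ((Num.sqrt (fine (poisson_mix G y)))%:E)
         <= (C * Num.sqrt K)%:E)%E.
Proof.
exists 4; split; first by rewrite ltr0n.
move=> K G K1 GK.
pose f y := fine (poisson_mix G y).
have Fy y : poisson_mix G y = (f y)%:E.
  rewrite /f fineK // ge0_fin_numE ?(@F_ge0 _ _ _ K1 GK y) //.
  exact: (le_lt_trans (@F_le1 _ _ _ K1 GK y) (ltry 1)).
have f0 y : 0 <= f y by have := @F_ge0 _ _ _ K1 GK y; rewrite Fy lee_fin.
have fsum n : \sum_(y < n) f y <= 1.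
  have := @F_sum _ _ _ K1 GK n.
  rewrite (eq_bigr (fun i : 'I_n => (f i)%:E)); last by move=> i _; rewrite Fy.
  by rewrite sumEFin lee_fin.
have fsucc y : f y.+1 <= K / y.+1%:R * f y.
  by have := @F_succ _ _ _ K1 GK y; rewrite !Fy -EFinM lee_fin.
apply: lime_le.
  by apply: is_cvg_nneseries => n _ _; rewrite lee_fin sqrtr_ge0.
apply: nearW => n /=.
rewrite sumEFin lee_fin.
exact: series_bound.
Qed.
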